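(* There exists a function $\phi:\mathbb{R}\to\mathbb{R}$ generated by a $\sigma$-activated network with width $3$ and depth $2$ such that $\phi(x)=x^2$ for all $x\in[-1,1]$.
   Context: Let $\sigma_1:\mathbb{R}\to\mathbb{R}$ be the continuous triangular-wave function of period $2$: $\sigma_1(x)=|x|$ for $x\in[-1,1]$, $\sigma_1(x+2)=\sigma_1(x)$. The activation is $\sigma(x)=\sigma_1(x)$ for $x\ge0$ and $\sigma(x)=x/(|x|+1)$ for $x<0$, applied entrywise. A function generated by a $\sigma$-activated network with one input, width $N$ and depth $L$ is a function of the form $\mathcal{L}_{\ell}\circ\sigma\circ\mathcal{L}_{\ell-1}\circ\cdots\circ\sigma\circ\mathcal{L}_0$ with $\ell\le L$ hidden layers, affine maps $\mathcal{L}_i$, $\mathcal{L}_0$ with domain $\mathbb{R}$, $\mathcal{L}_\ell$ with codomain $\mathbb{R}$, and at most $N$ neurons in each hidden layer. *)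

(* Defs.v *)
From Stdlib Require Import Reals.
From mathcomp Require Import all_boot all_order all_algebra.
From mathcomp Require Import Rstruct.

Set Implicit Arguments. Unset Strict Implicit. Unset Printing Implicit Defensive.

Local Open Scope R_scope.

(* Triangular wave of period 2: sigma1 x = |x - 2k| where k = floor((x+1)/2),
   so sigma1 x = |x| on [-1,1] and sigma1 (x+2) = sigma1 x.
   Int_part is the floor function of Stdlib. *)
Definition sigma1 (x : R) : R :=
  Rabs (x - 2 * IZR (Int_part ((x + 1) / 2))).

Definition sigma (x : R) : R :=
  if Rle_dec 0 x then sigma1 x else x / (Rabs x + 1).

(* hidden N k n h : h : R -> R^n is the output of the k-th hidden layer (after
   activation) of a one-input sigma-network whose hidden layers all have at most
   N neurons, the last one having exactly n neurons. *)
Inductive hidden (N : nat) : nat -> forall n : nat, (R -> 'I_n -> R) -> Prop :=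
| hidden1 (n : nat) (A b : 'I_n -> R) :
    (n <= N)%N -> hidden N 1 (fun x i => sigma (A i * x + b i))
| hiddenS (k n m : nat) (h : R -> 'I_m -> R) (W : 'I_n -> 'I_m -> R) (b : 'I_n -> R) :
    (n <= N)%N -> hidden N k h ->
    hidden N k.+1 (fun x i => sigma ((\sum_(j < m) W i j * h x j)%R + b i)).

(* f is generated by a sigma-activated network with one input, width N, depth L:
   l <= L hidden layers (l = 0 means f is affine), then an affine output map. *)
Definition generated (N L : nat) (f : R -> R) : Prop :=
  (exists a c : R, forall x, f x = a * x + c) \/
  (exists (k n : nat) (h : R -> 'I_n -> R) (w : 'I_n -> R) (c : R),
      (1 <= k <= L)%N /\ hidden N k h /\
      forall x, f x = (\sum_(i < n) w i * h x i)%R + c).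

(* Main.v *)
Require Import Defs.
From Stdlib Require Import Reals.
From mathcomp Require Import all_boot all_order all_algebra.
From mathcomp Require Import Rstruct.
From Stdlib Require Import Lra.
Local Open Scope R_scope.

Lemma sigma_neg u : u <= 0 -> Defs.sigma u = Rdiv u (Rminus 1 u).
Proof.
  intros Hu. unfold Defs.sigma. destruct (Rle_dec 0 u) as [H|H].
  - assert (u = 0) by lra. subst. unfold sigma1.
    replace ((0 + 1) / 2) with (/2) by field.
    assert (Int_part (/2) = Z0).
    { symmetry; apply Int_part_spec; simpl; lra. }
    rewrite H0. simpl. rewrite Rmult_0_r Rminus_0_r Rabs_R0. field.
  - have ->: Rabs u = - u by apply Rabs_left; lra. simpl; unfold Rdiv; f_equal; f_equal; ring.
Qed.

Theorem lemma17 :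
  exists phi : R -> R, generated 3 2 phi /\
    forall x : R, -1 <= x <= 1 -> phi x = x ^ 2.
Proof.
  set A : 'I_2 -> R := fun i => if (val i == 0)%N then 1 else -1.
  set b1 : 'I_2 -> R := fun _ => -2.
  set W : 'I_1 -> 'I_2 -> R := fun _ _ => -3/2.
  set b2 : 'I_1 -> R := fun _ => -2.
  have H1 : hidden 3 1 (fun x i => Defs.sigma (A i * x + b1 i)) by apply: hidden1.
  have H2 := @hiddenS 3 1 1 2 _ W b2 isT H1.
  eexists; split.
  { right. exists 2%N, 1%N; eexists; exists (fun _ => -9), 0; split; [|split; [exact H2|]]; [by []|].
    intros x. reflexivity. }
  intros x Hx. simpl.
  rewrite !big_ord_recr !big_ord0 /=.
  rewrite /A /b1 /W /b2 /=.
  rewrite -!RplusE -!RmultE.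
  have ->: Defs.sigma (1 * x + -2) = Rdiv (1 * x + -2) (Rminus 1 (1 * x + -2)) by apply sigma_neg; lra.
  have ->: Defs.sigma (-1 * x + -2) = Rdiv (-1 * x + -2) (Rminus 1 (-1 * x + -2)) by apply sigma_neg; lra.
  assert (Hs: 0 + -3/2 * ((1 * x + -2) / (1 - (1 * x + -2))) +
     -3/2 * ((-1 * x + -2) / (1 - (-1 * x + -2))) + -2
     = -3/2 * (6 / (9 - x^2)) + 1).
  { field. repeat split; nra. }
  change 0%R with (IZR Z0). rewrite Hs.
  assert (Ht: 8 <= 9 - x^2 <= 9) by nra.
  assert (H9: / (9 - x^2) >= / 9) by (apply Rle_ge, Rinv_le_contravar; lra).
  rewrite sigma_neg; [|unfold Rdiv; lra].
  assert (E: -9 * ((-3/2*(6/(9-x^2))+1)/(1-(-3/2*(6/(9-x^2))+1))) = x^2).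
  { field. repeat split; nra. }
  rewrite E. change (IZR Z0 + x ^ 2 + IZR Z0 = x * (x * 1)). ring.
Qed.
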